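(* Let $F(x,y)=(f(x,y),x,y)$ be a germ at $o=(0,0)$ of a real analytic map into $\mathbf{R}^3_1$ with $f(0,0)=0$, $f_x(0,0)=0$, $f_y(0,0)=1$, such that $\{B_F\neq0\}$ is dense in the domain, $A_F-\varphi B_F^2\equiv0$ for some real analytic function germ $\varphi$ at $o$, and $\nabla B_F(o)=(0,0)$. Let $\alpha_F(y):=f_{xx}(0,y)$ and $\beta_F(y):=\tfrac12 f_{xxx}(0,y)$. Then there exists a real number $\mu_F$ such that $$\alpha_F'+\alpha_F^2+\mu_F=0,\qquad \beta_F''+4\alpha_F\beta_F'=0.$$ Moreover, if $\mu_F>0$ (resp. $\mu_F<0$) then $F$ has no time-like points (resp. no space-like points) near $o$. In particular, if $F$ changes causal type, then $\mu_F=0$.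
   Context: $\mathbf{R}^3_1$ is Lorentz–Minkowski 3-space with coordinates $(t,x,y)$ and inner product $-dt^2+dx^2+dy^2$. $B_F:=1-f_x^2-f_y^2$, $A_F:=(1-f_x^2)f_{yy}+2f_xf_yf_{xy}+(1-f_y^2)f_{xx}$. A point is space-like if $B_F>0$, time-like if $B_F<0$. $F$ changes causal type means every neighborhood of $o$ contains both space-like and time-like points. Primes denote $d/dy$. (For such $F$ one has $f(x,y)=y+\frac{\alpha_F(y)}2x^2+\frac{\beta_F(y)}3x^3+O(x^4)$.) *)

(* Defs.v *)
From Stdlib Require Import Reals.
From Coquelicot Require Import Coquelicot.
Open Scope R_scope.

(* g is a real analytic function germ at o = (0,0): on a box |x|,|y| < r it is
   the sum of an absolutely convergent double power series
   sum_{i,j} a i j x^i y^j  (summed by total degree n = i + j). *)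
Definition analytic_germ2 (g : R -> R -> R) : Prop :=
  exists r : R, 0 < r /\ exists a : nat -> nat -> R,
    forall x y : R, Rabs x < r -> Rabs y < r ->
      ex_series (fun n => sum_f_R0 (fun i => Rabs (a i (n - i)%nat) * Rabs x ^ i * Rabs y ^ (n - i)) n)
      /\ is_series (fun n => sum_f_R0 (fun i => a i (n - i)%nat * x ^ i * y ^ (n - i)) n) (g x y).

Definition partial_x (g : R -> R -> R) (x y : R) : R := Derive (fun t => g t y) x.
Definition partial_y (g : R -> R -> R) (x y : R) : R := Derive (fun t => g x t) y.

Definition B_F (f : R -> R -> R) (x y : R) : R :=
  1 - (partial_x f x y)^2 - (partial_y f x y)^2.

Definition A_F (f : R -> R -> R) (x y : R) : R :=
  (1 - (partial_x f x y)^2) * partial_y (partial_y f) x y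
  + 2 * partial_x f x y * partial_y f x y * partial_y (partial_x f) x y
  + (1 - (partial_y f x y)^2) * partial_x (partial_x f) x y.

Definition alpha_F (f : R -> R -> R) (y : R) : R := Derive_n (fun x => f x y) 2 0.
Definition beta_F (f : R -> R -> R) (y : R) : R := / 2 * Derive_n (fun x => f x y) 3 0.

Definition near_o (e x y : R) : Prop := Rabs x < e /\ Rabs y < e.

(* {B_F <> 0} is dense in (some neighbourhood of o serving as) the domain *)
Definition B_nonzero_dense (f : R -> R -> R) : Prop :=
  exists e : R, 0 < e /\
    forall x y, near_o e x y -> forall d : R, 0 < d ->
      exists x' y', near_o e x' y' /\ Rabs (x' - x) < d /\ Rabs (y' - y) < d
                    /\ B_F f x' y' <> 0.

(* F changes causal type at o: every neighbourhood of o contains both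
   space-like (B_F > 0) and time-like (B_F < 0) points *)
Definition changes_causal_type (f : R -> R -> R) : Prop :=
  forall e : R, 0 < e ->
    (exists x y, near_o e x y /\ 0 < B_F f x y) /\
    (exists x y, near_o e x y /\ B_F f x y < 0).

(* Main.v *)
Require Import Defs.
From Stdlib Require Import Reals Lra Lia Psatz FunctionalExtensionality.
From Coquelicot Require Import Coquelicot.
Open Scope R_scope.

Lemma exs_le (u A : nat -> R) : (forall k, Rabs (u k) <= A k) -> ex_series A -> ex_series u.
Proof. intros H HA. apply ex_series_Rabs. apply (@ex_series_le R_AbsRing R_CompleteNormedModule _ A); auto.
  intro k. change (Rabs (Rabs (u k)) <= A k). rewrite Rabs_Rabsolu. auto. Qed.

Lemma Series_nonneg (a : nat -> R) : (forall n, 0 <= a n) -> ex_series a -> 0 <= Series a.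
Proof. intros H Ha. replace 0 with (Series (fun n => 0 * a n)).
  apply Series_le; auto. intro n; split; [lra|]. specialize (H n); lra.
  rewrite Series_scal_l; ring. Qed.

Lemma tail_bound (u A : nat -> R) n : (forall k, Rabs (u k) <= A k) -> ex_series A ->
  Rabs (Series u - sum_f_R0 u n) <= Series A - sum_f_R0 A n.
Proof.
  intros H HA. assert (Hu := exs_le u A H HA).
  rewrite (Series_incr_n u (S n)) by (lia || auto).
  rewrite (Series_incr_n A (S n)) by (lia || auto). simpl pred.
  replace (sum_f_R0 u n + Series (fun k => u (S n + k)%nat) - sum_f_R0 u n) with (Series (fun k => u (S n + k)%nat)) by ring.
  replace (sum_f_R0 A n + Series (fun k => A (S n + k)%nat) - sum_f_R0 A n) with (Series (fun k => A (S n + k)%nat)) by ring.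
  assert (HAn : ex_series (fun k => A (S n + k)%nat)) by (apply (ex_series_incr_n A (S n)); auto).
  eapply Rle_trans. apply Series_Rabs.
  apply (exs_le _ (fun k => A (S n + k)%nat)); auto. intro k; rewrite Rabs_Rabsolu; auto.
  apply Series_le; auto. intro k; split; [apply Rabs_pos| auto].
Qed.

Lemma series_deriv (g g' : nat -> R -> R) (A : nat -> R) (c : R) (d : posreal) x :
  Boule c d x ->
  (forall n y, Boule c d y -> is_derive (g n) y (g' n y)) ->
  (forall y, Boule c d y -> ex_series (fun n => g n y)) ->
  (forall n y, Boule c d y -> Rabs (g' n y) <= A n) -> ex_series A ->
  is_derive (fun y => Series (fun n => g n y)) x (Series (fun n => g' n x)).
Proof.
  intros Hx Hd Hs Hb HA.
  apply is_derive_Reals.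
  apply (CVU_derivable (fun N y => sum_f_R0 (fun n => g n y) N) (fun N y => sum_f_R0 (fun n => g' n y) N)
     (fun y => Series (fun n => g n y)) (fun y => Series (fun n => g' n y)) c d); auto.
  - intros eps Heps.
    assert (HL := Series_correct _ HA). apply is_series_Reals in HL.
    destruct (HL eps Heps) as [N HN]. exists N. intros n y Hn Hy.
    eapply Rle_lt_trans. apply tail_bound with (A := A); auto.
    specialize (HN n Hn). unfold R_dist in HN.
    assert (sum_f_R0 A n <= Series A).
    { rewrite (Series_incr_n A (S n)) by (lia || auto). simpl pred.
      assert (0 <= Series (fun k => A (S n + k)%nat)); [|lra].
      apply Series_nonneg. intro k. specialize (Hb (S n + k)%nat y Hy).
      pose proof (Rabs_pos (g' (S n + k)%nat y)); lra.
      apply (ex_series_incr_n A (S n)); auto. }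
    rewrite Rabs_left1 in HN; lra.
  - intros y Hy. specialize (Hs y Hy). apply Series_correct in Hs. apply is_series_Reals in Hs. exact Hs.
  - intros n y Hy. induction n; simpl.
    + apply is_derive_Reals. auto.
    + apply derivable_pt_lim_plus; auto. apply is_derive_Reals; auto.
Qed.

Definition Hh (a : nat -> nat -> R) n x y := sum_f_R0 (fun i => a i (n - i)%nat * x ^ i * y ^ (n - i)) n.
Definition Ma (a : nat -> nat -> R) n := sum_f_R0 (fun i => Rabs (a i (n - i)%nat)) n.
Definition AC (a : nat -> nat -> R) r := forall rho, 0 <= rho < r -> ex_series (fun n => Ma a n * rho ^ n).
Definition val (a : nat -> nat -> R) x y := Series (fun n => Hh a n x y).
Definition dx (a : nat -> nat -> R) i j := INR (S i) * a (S i) j.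
Definition dy (a : nat -> nat -> R) i j := INR (S j) * a i (S j).

Lemma Ma_pos a n : 0 <= Ma a n.
Proof. apply cond_pos_sum. intro; apply Rabs_pos. Qed.

Lemma H_bound a n x y rho : Rabs x <= rho -> Rabs y <= rho -> Rabs (Hh a n x y) <= Ma a n * rho ^ n.
Proof.
  intros Hx Hy. unfold Hh, Ma. eapply Rle_trans. apply Rsum_abs.
  rewrite Rmult_comm, scal_sum. apply sum_Rle. intros i Hi.
  rewrite !Rabs_mult, <- !RPow_abs.
  replace (rho ^ n) with (rho ^ i * rho ^ (n - i)) by (rewrite <- pow_add; f_equal; lia).
  rewrite Rmult_assoc. apply Rmult_le_compat_l. apply Rabs_pos.
  apply Rmult_le_compat; try apply pow_le; try apply Rabs_pos; apply pow_incr; split; auto; apply Rabs_pos.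
Qed.

Lemma AC_ex a r x y : AC a r -> Rabs x < r -> Rabs y < r -> ex_series (fun n => Hh a n x y).
Proof.
  intros H Hx Hy. set (rho := Rmax (Rabs x) (Rabs y)).
  assert (Hr : 0 <= rho < r) by (unfold rho; split; [eapply Rle_trans; [apply Rabs_pos|apply Rmax_l] | apply Rmax_lub_lt; auto]).
  apply (exs_le _ _ (fun n => H_bound a n x y rho (Rmax_l _ _) (Rmax_r _ _))). auto.
Qed.

Lemma val_bound a r x y rho : AC a r -> 0 <= rho < r -> Rabs x <= rho -> Rabs y <= rho ->
  Rabs (val a x y) <= Series (fun n => Ma a n * rho ^ n).
Proof.
  intros H Hr Hx Hy. unfold val. eapply Rle_trans. apply Series_Rabs.
  apply (exs_le _ (fun n => Ma a n * rho ^ n)); auto. intro; rewrite Rabs_Rabsolu; apply H_bound; auto.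
  apply Series_le; auto. intro n; split; [apply Rabs_pos| apply H_bound; auto].
Qed.

Lemma Ma_dx a n : Ma (dx a) n <= INR (S n) * Ma a (S n).
Proof.
  unfold Ma, dx. rewrite (decomp_sum _ (S n)) by lia. simpl pred.
  apply Rle_trans with (INR (S n) * sum_f_R0 (fun i => Rabs (a (S i) (S n - S i)%nat)) n).
  rewrite scal_sum. apply sum_Rle. intros i Hi. rewrite Rabs_mult, Rabs_right by (apply Rle_ge, pos_INR).
  rewrite Rmult_comm. replace (S n - S i)%nat with (n - i)%nat by lia.
  apply Rmult_le_compat_l. apply Rabs_pos. apply le_INR; lia.
  apply Rmult_le_compat_l. apply pos_INR. pose proof (Rabs_pos (a 0%nat (S n - 0)%nat)). lra.
Qed.

Lemma Ma_dy a n : Ma (dy a) n <= INR (S n) * Ma a (S n).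
Proof.
  unfold Ma, dy. change (sum_f_R0 ?f (S n)) with (sum_f_R0 f n + f (S n)).
  apply Rle_trans with (INR (S n) * sum_f_R0 (fun i => Rabs (a i (S n - i)%nat)) n).
  rewrite scal_sum. apply sum_Rle. intros i Hi. rewrite Rabs_mult, Rabs_right by (apply Rle_ge, pos_INR).
  rewrite Rmult_comm. replace (S n - i)%nat with (S (n - i))%nat by lia.
  apply Rmult_le_compat_l. apply Rabs_pos. apply le_INR; lia.
  apply Rmult_le_compat_l. apply pos_INR. pose proof (Rabs_pos (a (S n) (S n - S n)%nat)). lra.
Qed.

Lemma geom_bound rho s n : 0 <= rho < s -> INR (S n) * rho ^ n * (s - rho) <= s ^ (S n).
Proof.
  intros H. induction n.
  - simpl. lra.
  - assert (rho ^ S n <= s ^ S n) by (apply pow_incr; lra).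
    rewrite S_INR. simpl in *. nra.
Qed.

Lemma AC_shift a b r : AC a r -> (forall n, Ma b n <= INR (S n) * Ma a (S n)) -> AC b r.
Proof.
  intros H Hb rho Hr. set (s := (rho + r) / 2).
  assert (Hs : 0 <= s < r) by (unfold s; lra).
  specialize (H s Hs). apply ex_series_incr_1 in H.
  apply (ex_series_le (V := R_CompleteNormedModule) _ (fun n => / (s - rho) * (Ma a (S n) * s ^ (S n)))).
  - intro n. change (Rabs (Ma b n * rho ^ n) <= / (s - rho) * (Ma a (S n) * s ^ S n)).
    rewrite Rabs_right by (apply Rle_ge, Rmult_le_pos; [apply Ma_pos| apply pow_le; lra]).
    apply Rle_trans with (Ma a (S n) * (INR (S n) * rho ^ n)).
    + specialize (Hb n). pose proof (pow_le rho n (proj1 Hr)). nra.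
    + pose proof (geom_bound rho s n ltac:(unfold s; lra)). pose proof (Ma_pos a (S n)).
      assert (0 < s - rho) by (unfold s; lra).
      apply Rle_trans with (Ma a (S n) * (s ^ S n / (s - rho))).
      apply Rmult_le_compat_l; auto. apply Rmult_le_reg_r with (s - rho); auto.
      replace (s ^ S n / (s - rho) * (s - rho)) with (s ^ S n) by (field; lra). lra.
      right; unfold Rdiv; ring.
  - apply (ex_series_scal_l (V := R_NormedModule) (/ (s - rho))). exact H.
Qed.

Lemma AC_dx a r : AC a r -> AC (dx a) r.
Proof. intro H; apply (AC_shift a); auto. apply Ma_dx. Qed.
Lemma AC_dy a r : AC a r -> AC (dy a) r.
Proof. intro H; apply (AC_shift a); auto. apply Ma_dy. Qed.

Lemma sum_derive (h h' : nat -> R -> R) n x : (forall i, is_derive (h i) x (h' i x)) ->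
  is_derive (fun t => sum_f_R0 (fun i => h i t) n) x (sum_f_R0 (fun i => h' i x) n).
Proof. intros H. induction n; simpl; auto. apply (is_derive_plus (fun t => sum_f_R0 (fun i => h i t) n) (h (S n))); auto. Qed.

Lemma mono_derive c d x (i : nat) : is_derive (fun t => c * t^i * d) x (c * (INR i * x^(pred i)) * d).
Proof. auto_derive. auto. ring. Qed.
Lemma mono_derive2 c d x (i : nat) : is_derive (fun t => c * d * t^i) x (c * d * (INR i * x^(pred i))).
Proof. auto_derive. auto. ring. Qed.

Lemma H_dx a n x y : is_derive (fun t => Hh a (S n) t y) x (Hh (dx a) n x y).
Proof.
  unfold Hh. eapply is_derive_ext. intro t; reflexivity.
  replace (sum_f_R0 (fun i => dx a i (n - i)%nat * x ^ i * y ^ (n - i)) n) with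
    (sum_f_R0 (fun i => a i (S n - i)%nat * (INR i * x ^ pred i) * y ^ (S n - i)) (S n)).
  apply sum_derive with (h := fun i t => a i (S n - i)%nat * t ^ i * y ^ (S n - i))
    (h' := fun i t => a i (S n - i)%nat * (INR i * t ^ pred i) * y ^ (S n - i)). intro; apply mono_derive.
  rewrite (decomp_sum _ (S n)) by lia. simpl pred. simpl INR at 1. rewrite Rmult_0_l, Rmult_0_r, Rmult_0_l, Rplus_0_l.
  apply sum_eq. intros i Hi. unfold dx. replace (S n - S i)%nat with (n - i)%nat by lia. simpl pred. ring.
Qed.

Lemma H_d0 a x y : Hh a 0 x y = a 0%nat 0%nat.
Proof. unfold Hh; simpl; ring. Qed.

Lemma H_dy a n x y : is_derive (fun t => Hh a (S n) x t) y (Hh (dy a) n x y).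
Proof.
  unfold Hh. 
  replace (sum_f_R0 (fun i => dy a i (n - i)%nat * x ^ i * y ^ (n - i)) n) with
    (sum_f_R0 (fun i => a i (S n - i)%nat * x ^ i * (INR (S n - i) * y ^ pred (S n - i))) (S n)).
  apply sum_derive with (h := fun i t => a i (S n - i)%nat * x ^ i * t ^ (S n - i))
    (h' := fun i t => a i (S n - i)%nat * x ^ i * (INR (S n - i) * t ^ pred (S n - i))). intro; apply mono_derive2.
  change (sum_f_R0 ?f (S n)) with (sum_f_R0 f n + f (S n)). cbv beta. rewrite Nat.sub_diag. simpl INR at 2. rewrite Rmult_0_l, Rmult_0_r, Rplus_0_r.
  apply sum_eq. intros i Hi. unfold dy. replace (S n - i)%nat with (S (n - i))%nat by lia. simpl pred. ring.
Qed.

Lemma val_dx a r x y : AC a r -> Rabs x < r -> Rabs y < r -> is_derive (fun t => val a t y) x (val (dx a) x y).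
Proof.
  intros H Hx Hy. set (rho := (Rmax (Rabs x) (Rabs y) + r) / 2).
  assert (Hm1 := Rmax_l (Rabs x) (Rabs y)). assert (Hm2 := Rmax_r (Rabs x) (Rabs y)).
  assert (Hm3 : Rmax (Rabs x) (Rabs y) < r) by (apply Rmax_lub_lt; auto).
  assert (Hd : 0 < rho - Rabs x) by (unfold rho; lra).
  assert (Hrho : 0 <= rho < r) by (unfold rho; pose proof (Rabs_pos x); lra).
  assert (Hr2 : Rmax (Rabs x) (Rabs y) < rho) by (unfold rho; lra).
  set (d := mkposreal _ Hd).
  assert (Hb : forall t, Boule x d t -> Rabs t < rho).
  { intros t Ht. unfold Boule in Ht; simpl in Ht. pose proof (Rabs_triang_inv t x). lra. }
  unfold val.
  replace (Series (fun n => Hh (dx a) n x y)) with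
    (Series (fun n => match n with O => 0 | S m => Hh (dx a) m x y end)).
  apply (series_deriv (fun n t => Hh a n t y) (fun n t => match n with O => 0 | S m => Hh (dx a) m t y end)
     (fun n => match n with O => 0 | S m => Ma (dx a) m * rho ^ m end) x d).
  - unfold Boule; rewrite Rminus_eq_0, Rabs_R0; apply cond_pos.
  - intros [|n] t Ht. unfold Hh; simpl. auto_derive; auto; ring.
    apply H_dx.
  - intros t Ht. specialize (Hb t Ht). apply (AC_ex a r); auto; lra.
  - intros [|n] t Ht. rewrite Rabs_R0; lra. specialize (Hb t Ht). apply H_bound; lra.
  - apply ex_series_incr_1. apply (AC_dx a r H rho Hrho).
  - rewrite Series_incr_1. simpl. ring.
    apply ex_series_incr_1. apply (AC_ex (dx a) r); auto. apply AC_dx; auto.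
Qed.

Lemma val_dy a r x y : AC a r -> Rabs x < r -> Rabs y < r -> is_derive (fun t => val a x t) y (val (dy a) x y).
Proof.
  intros H Hx Hy. set (rho := (Rmax (Rabs x) (Rabs y) + r) / 2).
  assert (Hm1 := Rmax_l (Rabs x) (Rabs y)). assert (Hm2 := Rmax_r (Rabs x) (Rabs y)).
  assert (Hm3 : Rmax (Rabs x) (Rabs y) < r) by (apply Rmax_lub_lt; auto).
  assert (Hd : 0 < rho - Rabs y) by (unfold rho; lra).
  assert (Hrho : 0 <= rho < r) by (unfold rho; pose proof (Rabs_pos x); lra).
  assert (Hr2 : Rmax (Rabs x) (Rabs y) < rho) by (unfold rho; lra).
  set (d := mkposreal _ Hd).
  assert (Hb : forall t, Boule y d t -> Rabs t < rho).
  { intros t Ht. unfold Boule in Ht; simpl in Ht. pose proof (Rabs_triang_inv t y). lra. }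
  unfold val.
  replace (Series (fun n => Hh (dy a) n x y)) with
    (Series (fun n => match n with O => 0 | S m => Hh (dy a) m x y end)).
  apply (series_deriv (fun n t => Hh a n x t) (fun n t => match n with O => 0 | S m => Hh (dy a) m x t end)
     (fun n => match n with O => 0 | S m => Ma (dy a) m * rho ^ m end) y d).
  - unfold Boule; rewrite Rminus_eq_0, Rabs_R0; apply cond_pos.
  - intros [|n] t Ht. unfold Hh; simpl. auto_derive; auto; ring.
    apply H_dy.
  - intros t Ht. specialize (Hb t Ht). apply (AC_ex a r); auto; lra.
  - intros [|n] t Ht. rewrite Rabs_R0; lra. specialize (Hb t Ht). apply H_bound; lra.
  - apply ex_series_incr_1. apply (AC_dy a r H rho Hrho).
  - rewrite Series_incr_1. simpl. ring.
    apply ex_series_incr_1. apply (AC_ex (dy a) r); auto. apply AC_dy; auto.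
Qed.

Definition D (a : nat -> nat -> R) i j := Nat.iter i dx (Nat.iter j dy a).

Lemma dxdy a : dx (dy a) = dy (dx a).
Proof. apply functional_extensionality; intro i; apply functional_extensionality; intro j.
  unfold dx, dy; ring. Qed.

Lemma iter_dx_dy i c : Nat.iter i dx (dy c) = dy (Nat.iter i dx c).
Proof. induction i; simpl; auto. rewrite IHi, dxdy; auto. Qed.

Lemma D_Sj a i j : D a i (S j) = dy (D a i j).
Proof. unfold D. simpl. apply iter_dx_dy. Qed.
Lemma D_Si a i j : D a (S i) j = dx (D a i j).
Proof. reflexivity. Qed.

Lemma AC_D a r i j : AC a r -> AC (D a i j) r.
Proof. intro H. induction i. induction j. auto. rewrite D_Sj. apply AC_dy; auto.
  rewrite D_Si. apply AC_dx; auto. Qed.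

Definition Fv a i j x y := val (D a i j) x y.

Inductive ex : Type := EC (c : R) | EF (i j : nat) | EP (i j : nat) | EAdd (e1 e2 : ex) | EMul (e1 e2 : ex).

Fixpoint ev (a b : nat -> nat -> R) (e : ex) (x y : R) : R :=
  match e with
  | EC c => c
  | EF i j => Fv a i j x y
  | EP i j => Fv b i j x y
  | EAdd e1 e2 => ev a b e1 x y + ev a b e2 x y
  | EMul e1 e2 => ev a b e1 x y * ev a b e2 x y
  end.

Fixpoint sdx e := match e with
  | EC _ => EC 0 | EF i j => EF (S i) j | EP i j => EP (S i) j
  | EAdd e1 e2 => EAdd (sdx e1) (sdx e2)
  | EMul e1 e2 => EAdd (EMul (sdx e1) e2) (EMul e1 (sdx e2)) end.
Fixpoint sdy e := match e with
  | EC _ => EC 0 | EF i j => EF i (S j) | EP i j => EP i (S j)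
  | EAdd e1 e2 => EAdd (sdy e1) (sdy e2)
  | EMul e1 e2 => EAdd (EMul (sdy e1) e2) (EMul e1 (sdy e2)) end.

Section EV.
Variables (a b : nat -> nat -> R) (r : R).
Hypothesis (Ha : AC a r) (Hb : AC b r).

Lemma Fv_dx c i j x y : AC c r -> Rabs x < r -> Rabs y < r -> is_derive (fun t => Fv c i j t y) x (Fv c (S i) j x y).
Proof. intros. unfold Fv. rewrite D_Si. apply (val_dx _ r); auto. apply AC_D; auto. Qed.
Lemma Fv_dy c i j x y : AC c r -> Rabs x < r -> Rabs y < r -> is_derive (fun t => Fv c i j x t) y (Fv c i (S j) x y).
Proof. intros. unfold Fv. rewrite D_Sj. apply (val_dy _ r); auto. apply AC_D; auto. Qed.

Lemma ev_dx e x y : Rabs x < r -> Rabs y < r -> is_derive (fun t => ev a b e t y) x (ev a b (sdx e) x y).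
Proof.
  intros Hx Hy. induction e; simpl.
  - auto_derive; auto; try ring.
  - apply Fv_dx; auto.
  - apply Fv_dx; auto.
  - apply (is_derive_plus (fun t => ev a b e1 t y) (fun t => ev a b e2 t y)); auto.
  - apply (is_derive_mult (fun t => ev a b e1 t y) (fun t => ev a b e2 t y)); auto.
    intros; apply Rmult_comm.
Qed.

Lemma ev_dy e x y : Rabs x < r -> Rabs y < r -> is_derive (fun t => ev a b e x t) y (ev a b (sdy e) x y).
Proof.
  intros Hx Hy. induction e; simpl.
  - auto_derive; auto; try ring.
  - apply Fv_dy; auto.
  - apply Fv_dy; auto.
  - apply (is_derive_plus (fun t => ev a b e1 x t) (fun t => ev a b e2 x t)); auto.
  - apply (is_derive_mult (fun t => ev a b e1 x t) (fun t => ev a b e2 x t)); auto.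
    intros; apply Rmult_comm.
Qed.

Lemma loc_box (P : R -> Prop) x : Rabs x < r -> (forall t, Rabs t < r -> P t) -> locally x P.
Proof.
  intros Hx H. assert (Hd : 0 < r - Rabs x) by lra. exists (mkposreal _ Hd). intros t Ht.
  apply H. change (Rabs (t - x) < r - Rabs x) in Ht. pose proof (Rabs_triang_inv t x). lra.
Qed.

Lemma pdx_loc (g : R -> R -> R) e x y : (forall x y, Rabs x < r -> Rabs y < r -> g x y = ev a b e x y) ->
  Rabs x < r -> Rabs y < r -> partial_x g x y = ev a b (sdx e) x y.
Proof.
  intros H Hx Hy. unfold partial_x. rewrite (Derive_ext_loc _ (fun t => ev a b e t y)).
  apply is_derive_unique, ev_dx; auto.
  apply loc_box; auto.
Qed.

Lemma pdy_loc (g : R -> R -> R) e x y : (forall x y, Rabs x < r -> Rabs y < r -> g x y = ev a b e x y) ->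
  Rabs x < r -> Rabs y < r -> partial_y g x y = ev a b (sdy e) x y.
Proof.
  intros H Hx Hy. unfold partial_y. rewrite (Derive_ext_loc _ (fun t => ev a b e x t)).
  apply is_derive_unique, ev_dy; auto.
  apply loc_box; auto.
Qed.

Lemma zero_dx e : (forall x y, Rabs x < r -> Rabs y < r -> ev a b e x y = 0) ->
  forall x y, Rabs x < r -> Rabs y < r -> ev a b (sdx e) x y = 0.
Proof.
  intros H x y Hx Hy. rewrite <- (pdx_loc (fun _ _ => 0) e x y); auto.
  unfold partial_x. apply Derive_const. intros; rewrite H; auto.
Qed.
Lemma zero_dy e : (forall x y, Rabs x < r -> Rabs y < r -> ev a b e x y = 0) ->
  forall x y, Rabs x < r -> Rabs y < r -> ev a b (sdy e) x y = 0.
Proof.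
  intros H x y Hx Hy. rewrite <- (pdy_loc (fun _ _ => 0) e x y); auto.
  unfold partial_y. apply Derive_const. intros; rewrite H; auto.
Qed.

End EV.

Arguments Fv : simpl never.

Definition eneg e := EMul (EC (-1)) e.
Definition eB := EAdd (EC 1) (EAdd (eneg (EMul (EF 1 0) (EF 1 0))) (eneg (EMul (EF 0 1) (EF 0 1)))).
Definition eA := EAdd (EAdd (EMul (EAdd (EC 1) (eneg (EMul (EF 1 0) (EF 1 0)))) (EF 0 2))
                            (EMul (EMul (EMul (EC 2) (EF 1 0)) (EF 0 1)) (EF 1 1)))
                      (EMul (EAdd (EC 1) (eneg (EMul (EF 0 1) (EF 0 1)))) (EF 2 0)).
Definition eG := EAdd eA (eneg (EMul (EP 0 0) (EMul eB eB))).
Definition c1 := EAdd (EAdd (EF 3 0) (EF 1 2)) (eneg (EMul (EP 1 0) eB)).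
Definition c2 := EAdd (EAdd (EF 2 0) (EF 0 2)) (EAdd (EMul (EC (-1/2)) (EF 2 0)) (EMul (EC (-2)) (EMul (EP 0 0) eB))).
Definition c3 := EMul (EC (-1/2)) (EF 1 1).
Definition c4 := EMul (EC (-1/2)) (sdx (sdx eB)).
Definition d1 := EAdd (EAdd (EF 2 1) (EF 0 3)) (eneg (EMul (EP 0 1) eB)).
Definition d2 := EMul (EC (-1/2)) (EF 1 1).
Definition d3 := EAdd (EAdd (EF 2 0) (EF 0 2)) (EAdd (EMul (EC (-1/2)) (EF 0 2)) (EMul (EC (-2)) (EMul (EP 0 0) eB))).
Definition d4 := EMul (EC (-1/2)) (sdx (sdy eB)).

Lemma I3 a b x y : ev a b (sdx eG) x y =
  -(1/2) * ev a b (EF 0 1) x y * ev a b (sdy (sdx eB)) x y + ev a b eB x y * ev a b c1 x y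
  + ev a b (sdx eB) x y * ev a b c2 x y + ev a b (sdy eB) x y * ev a b c3 x y + ev a b (EF 1 0) x y * ev a b c4 x y.
Proof. unfold eG, eA, eB, c1, c2, c3, c4, eneg. simpl. field. Qed.

Lemma I4 a b x y : ev a b (sdy eG) x y =
  -(1/2) * ev a b (EF 0 1) x y * ev a b (sdy (sdy eB)) x y + ev a b eB x y * ev a b d1 x y
  + ev a b (sdx eB) x y * ev a b d2 x y + ev a b (sdy eB) x y * ev a b d3 x y + ev a b (EF 1 0) x y * ev a b d4 x y.
Proof. unfold eG, eA, eB, d1, d2, d3, d4, eneg. simpl. field. Qed.

Lemma I1 a b x y : ev a b (sdx eB) x y = -2 * (Fv a 1 0 x y * Fv a 2 0 x y + Fv a 0 1 x y * Fv a 1 1 x y).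
Proof. unfold eB, eneg. simpl. field. Qed.
Lemma I2 a b x y : ev a b (sdy eB) x y = -2 * (Fv a 1 0 x y * Fv a 1 1 x y + Fv a 0 1 x y * Fv a 0 2 x y).
Proof. unfold eB, eneg. simpl. field. Qed.

Fixpoint bnd (KA KB : nat -> nat -> R) (e : ex) : R :=
  match e with
  | EC c => Rabs c | EF i j => KA i j | EP i j => KB i j
  | EAdd e1 e2 => bnd KA KB e1 + bnd KA KB e2
  | EMul e1 e2 => bnd KA KB e1 * bnd KA KB e2 end.

Lemma ev_bnd a b KA KB e x y : (forall i j, Rabs (Fv a i j x y) <= KA i j) -> (forall i j, Rabs (Fv b i j x y) <= KB i j) ->
  Rabs (ev a b e x y) <= bnd KA KB e.
Proof.
  intros HA HB. induction e; simpl; auto. lra.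
  eapply Rle_trans. apply Rabs_triang. lra.
  rewrite Rabs_mult. apply Rmult_le_compat; auto; apply Rabs_pos.
Qed.

Lemma minmax_abs y x : Rmin 0 y <= x <= Rmax 0 y -> Rabs x <= Rabs y.
Proof.
  intros [H1 H2]. destruct (Rle_dec 0 y).
  rewrite Rmin_left in H1 by lra. rewrite Rmax_right in H2 by lra.
  rewrite !Rabs_right by lra. lra.
  rewrite Rmin_right in H1 by lra. rewrite Rmax_left in H2 by lra.
  rewrite !Rabs_left1 by lra. lra.
Qed.

Lemma derive_cont (g g' : R -> R) t : is_derive g t (g' t) -> continuity_pt g t.
Proof. intro H. apply continuity_pt_filterlim. apply (ex_derive_continuous (K := R_AbsRing) (V := R_NormedModule)).
  exists (g' t). exact H. Qed.

Lemma mvt_bound (g g' : R -> R) rho K n y : 0 <= K ->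
  (forall t, Rabs t < rho -> is_derive g t (g' t)) ->
  (forall t, Rabs t < rho -> Rabs (g' t) <= K * Rabs t ^ n) -> Rabs y < rho ->
  Rabs (g y - g 0) <= K * Rabs y ^ S n.
Proof.
  intros HK Hd Hb Hy.
  destruct (MVT_gen g 0 y g') as [c [Hc Heq]].
  - intros x Hx. apply Hd. assert (Rabs x <= Rabs y) by (apply minmax_abs; lra). lra.
  - intros x Hx. apply (derive_cont g g'). apply Hd. assert (Rabs x <= Rabs y) by (apply minmax_abs; lra). lra.
  - rewrite Heq. assert (Hcy : Rabs c <= Rabs y) by (apply minmax_abs; lra).
    rewrite Rabs_mult, Rminus_0_r. simpl.
    assert (Rabs (g' c) <= K * Rabs y ^ n).
    { eapply Rle_trans. apply Hb; lra. apply Rmult_le_compat_l; auto. apply pow_incr; split; auto; apply Rabs_pos. }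
    pose proof (Rabs_pos y). pose proof (Rabs_pos (g' c)). nra.
Qed.

Lemma const_deriv (g g' : R -> R) rho c t : (forall t, Rabs t < rho -> is_derive g t (g' t)) ->
  (forall t, Rabs t < rho -> g t = c) -> Rabs t < rho -> g' t = 0.
Proof.
  intros Hd Hc Ht. assert (H0 : is_derive g t 0).
  { apply (is_derive_ext_loc (fun _ => c)). apply (loc_box rho); auto. intros; rewrite Hc; auto.
    auto_derive; auto. }
  rewrite <- (is_derive_unique g t (g' t)); auto. apply is_derive_unique; auto.
Qed.

Lemma deriv_mul_exp (N : R -> R) n' x k : is_derive N x n' ->
  is_derive (fun t => N t * exp (k * t)) x ((n' + k * N x) * exp (k * x)).
Proof. intro H. auto_derive. exists n'; exact H.
  replace (Derive (fun x0 : R => N x0) x) with n'. ring. symmetry; apply is_derive_unique; exact H. Qed.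

Lemma gronwall_aux (N N' : R -> R) rho C k y : 0 <= C ->
  (forall t, Rabs t < rho -> is_derive N t (N' t)) -> (forall t, Rabs t < rho -> 0 <= N t) ->
  (forall t, Rabs t < rho -> Rabs (N' t) <= C * N t) -> N 0 = 0 -> Rabs y < rho ->
  (forall c, Rabs c <= Rabs y -> (N' c + k * N c) * y <= 0) -> N y = 0.
Proof.
  intros HC Hd Hp Hb H0 Hy Hsg.
  set (h := fun t => N t * exp (k * t)).
  destruct (MVT_gen h 0 y (fun t => (N' t + k * N t) * exp (k * t))) as [c [Hc Heq]].
  - intros x Hx. assert (Rabs x <= Rabs y) by (apply minmax_abs; lra).
    apply deriv_mul_exp. apply Hd; lra.
  - intros x Hx. assert (Rabs x <= Rabs y) by (apply minmax_abs; lra).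
    apply (derive_cont h (fun t => (N' t + k * N t) * exp (k * t))).
    apply deriv_mul_exp. apply Hd; lra.
  - assert (Hcy : Rabs c <= Rabs y) by (apply minmax_abs; lra).
    specialize (Hsg c Hcy).
    pose proof (exp_pos (k * c)). unfold h in Heq. rewrite H0 in Heq.
    assert (N y * exp (k * y) <= 0).
    { rewrite Rminus_0_r in Heq. replace (N y * exp (k * y)) with ((N' c + k * N c) * y * exp (k * c)) by lra.
      nra. }
    pose proof (exp_pos (k * y)). pose proof (Hp y Hy). nra.
Qed.

Lemma gronwall (N N' : R -> R) rho C : 0 <= C ->
  (forall t, Rabs t < rho -> is_derive N t (N' t)) -> (forall t, Rabs t < rho -> 0 <= N t) ->
  (forall t, Rabs t < rho -> Rabs (N' t) <= C * N t) -> N 0 = 0 ->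
  forall y, Rabs y < rho -> N y = 0.
Proof.
  intros HC Hd Hp Hb H0 y Hy.
  destruct (Rle_dec 0 y) as [Hy0|Hy0].
  - apply (gronwall_aux N N' rho C (- C)); auto.
    intros c Hc. assert (Rabs c < rho) by lra. specialize (Hb c H). apply Rabs_le_between in Hb. nra.
  - apply (gronwall_aux N N' rho C C); auto.
    intros c Hc. assert (Rabs c < rho) by lra. specialize (Hb c H). apply Rabs_le_between in Hb. nra.
Qed.

Arguments Fv : simpl never.

Lemma an_AC (g : R -> R -> R) r a : (forall x y : R, Rabs x < r -> Rabs y < r ->
      ex_series (fun n => sum_f_R0 (fun i => Rabs (a i (n - i)%nat) * Rabs x ^ i * Rabs y ^ (n - i)) n)
      /\ is_series (fun n => sum_f_R0 (fun i => a i (n - i)%nat * x ^ i * y ^ (n - i)) n) (g x y)) -> AC a r.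
Proof.
  intros H rho Hr. destruct (H rho rho) as [H1 _]; try (rewrite Rabs_right; lra).
  eapply ex_series_ext; [|exact H1]. intro n. simpl. unfold Ma. rewrite Rmult_comm, scal_sum.
  apply sum_eq. intros i Hi. rewrite (Rabs_right rho) by lra. rewrite Rmult_assoc, <- pow_add. f_equal. f_equal. lia.
Qed.

Lemma an_val (g : R -> R -> R) r a : (forall x y : R, Rabs x < r -> Rabs y < r ->
      ex_series (fun n => sum_f_R0 (fun i => Rabs (a i (n - i)%nat) * Rabs x ^ i * Rabs y ^ (n - i)) n)
      /\ is_series (fun n => sum_f_R0 (fun i => a i (n - i)%nat * x ^ i * y ^ (n - i)) n) (g x y)) ->
   forall x y, Rabs x < r -> Rabs y < r -> g x y = Fv a 0 0 x y.
Proof.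
  intros H x y Hx Hy. destruct (H x y Hx Hy) as [_ H2]. unfold Fv, val, D. simpl. unfold Hh.
  symmetry; apply is_series_unique; auto.
Qed.

Lemma AC_mono a r r' : AC a r -> r' <= r -> AC a r'.
Proof. intros H Hr rho Hrho. apply H. lra. Qed.

Lemma div_bound q u w : 1/2 <= q -> q * u = w -> Rabs u <= 2 * Rabs w.
Proof. intros Hq Hw. subst w. rewrite Rabs_mult, (Rabs_right q) by lra. pose proof (Rabs_pos u). nra. Qed.

Lemma lin4 a1 a2 a3 a4 b1 b2 b3 b4 S B1 B2 B3 B4 :
  Rabs a1 <= S -> Rabs a2 <= S -> Rabs a3 <= S -> Rabs a4 <= S ->
  Rabs b1 <= B1 -> Rabs b2 <= B2 -> Rabs b3 <= B3 -> Rabs b4 <= B4 ->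
  Rabs (a1 * b1 + a2 * b2 + a3 * b3 + a4 * b4) <= S * (B1 + B2 + B3 + B4).
Proof.
  intros.
  assert (forall a b B, Rabs a <= S -> Rabs b <= B -> Rabs (a * b) <= S * B).
  { intros a b B Ha Hb. rewrite Rabs_mult. apply Rmult_le_compat; auto; apply Rabs_pos. }
  eapply Rle_trans. apply Rabs_triang. eapply Rle_trans. apply Rplus_le_compat_r. apply Rabs_triang.
  eapply Rle_trans. apply Rplus_le_compat_r. apply Rplus_le_compat_r. apply Rabs_triang.
  assert (Rabs (a1 * b1) <= S * B1) by auto. assert (Rabs (a2 * b2) <= S * B2) by auto.
  assert (Rabs (a3 * b3) <= S * B3) by auto. assert (Rabs (a4 * b4) <= S * B4) by auto. lra.
Qed.

Lemma sq_ineq z1 z2 z3 z4 z5 w1 w2 w3 w4 w5 K :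
  let S := Rabs z1 + Rabs z2 + Rabs z3 + Rabs z4 + Rabs z5 in
  0 <= K -> Rabs w1 <= K * S -> Rabs w2 <= K * S -> Rabs w3 <= K * S -> Rabs w4 <= K * S -> Rabs w5 <= K * S ->
  Rabs (2 * (z1 * w1 + (z2 * w2 + (z3 * w3 + (z4 * w4 + z5 * w5))))) <= (10 * K) * (z1 * z1 + (z2 * z2 + (z3 * z3 + (z4 * z4 + z5 * z5)))).
Proof.
  intros S HK H1 H2 H3 H4 H5.
  assert (HS : Rabs (z1 * w1 + (z2 * w2 + (z3 * w3 + (z4 * w4 + z5 * w5)))) <= K * S * S).
  { assert (forall z w, Rabs w <= K * S -> Rabs (z * w) <= Rabs z * (K * S)).
    { intros z w Hw. rewrite Rabs_mult. apply Rmult_le_compat_l; auto; apply Rabs_pos. }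
    pose proof (H z1 w1 H1). pose proof (H z2 w2 H2). pose proof (H z3 w3 H3). pose proof (H z4 w4 H4). pose proof (H z5 w5 H5).
    assert (T : Rabs (z1 * w1 + (z2 * w2 + (z3 * w3 + (z4 * w4 + z5 * w5)))) <=
       Rabs z1 * (K*S) + (Rabs z2*(K*S) + (Rabs z3 *(K*S) + (Rabs z4*(K*S) + Rabs z5*(K*S))))).
    { eapply Rle_trans. apply Rabs_triang. apply Rplus_le_compat; auto.
      eapply Rle_trans. apply Rabs_triang. apply Rplus_le_compat; auto.
      eapply Rle_trans. apply Rabs_triang. apply Rplus_le_compat; auto.
      eapply Rle_trans. apply Rabs_triang. apply Rplus_le_compat; auto. }
    eapply Rle_trans; [exact T|]. right. unfold S. ring. }
  assert (HS2 : S * S <= 5 * (z1 * z1 + (z2 * z2 + (z3 * z3 + (z4 * z4 + z5 * z5))))).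
  { assert (E : forall z, z * z = Rabs z * Rabs z).
    { intro z. rewrite <- Rabs_mult, Rabs_right; [auto| apply Rle_ge, Rle_0_sqr]. }
    rewrite (E z1), (E z2), (E z3), (E z4), (E z5). unfold S.
    set (u1 := Rabs z1). set (u2 := Rabs z2). set (u3 := Rabs z3). set (u4 := Rabs z4). set (u5 := Rabs z5).
    pose proof (Rle_0_sqr (u1 - u2)). pose proof (Rle_0_sqr (u1 - u3)). pose proof (Rle_0_sqr (u1 - u4)).
    pose proof (Rle_0_sqr (u1 - u5)). pose proof (Rle_0_sqr (u2 - u3)). pose proof (Rle_0_sqr (u2 - u4)).
    pose proof (Rle_0_sqr (u2 - u5)). pose proof (Rle_0_sqr (u3 - u4)). pose proof (Rle_0_sqr (u3 - u5)).
    pose proof (Rle_0_sqr (u4 - u5)). unfold Rsqr in *. nra. }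
  rewrite Rabs_mult, Rabs_right by lra.
  assert (0 <= K * (S * S)) by (apply Rmult_le_pos; auto; apply Rle_0_sqr). nra.
Qed.

Arguments Fv : simpl never.

Definition ez2 := EAdd (EF 0 1) (EC (-1)).
Definition eN5 e1 e2 e3 e4 e5 := EAdd (EMul e1 e1) (EAdd (EMul e2 e2) (EAdd (EMul e3 e3) (EAdd (EMul e4 e4) (EMul e5 e5)))).

Lemma N_val a b e1 e2 e3 e4 e5 x y : ev a b (eN5 e1 e2 e3 e4 e5) x y =
  ev a b e1 x y * ev a b e1 x y + (ev a b e2 x y * ev a b e2 x y + (ev a b e3 x y * ev a b e3 x y +
  (ev a b e4 x y * ev a b e4 x y + ev a b e5 x y * ev a b e5 x y))).
Proof. reflexivity. Qed.

Lemma N_der a b e1 e2 e3 e4 e5 x y : ev a b (sdy (eN5 e1 e2 e3 e4 e5)) x y =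
  2 * (ev a b e1 x y * ev a b (sdy e1) x y + (ev a b e2 x y * ev a b (sdy e2) x y + (ev a b e3 x y * ev a b (sdy e3) x y +
  (ev a b e4 x y * ev a b (sdy e4) x y + ev a b e5 x y * ev a b (sdy e5) x y)))).
Proof. simpl. ring. Qed.

Lemma sumsq5 z1 z2 z3 z4 z5 : z1 * z1 + (z2 * z2 + (z3 * z3 + (z4 * z4 + z5 * z5))) = 0 ->
  z1 = 0 /\ z2 = 0 /\ z3 = 0 /\ z4 = 0 /\ z5 = 0.
Proof. intro H. repeat split; nra. Qed.

Lemma step_const a r i m c rho : AC a r -> rho <= r ->
  (forall t, Rabs t < rho -> Fv a i m 0 t = c) -> forall t, Rabs t < rho -> Fv a i (S m) 0 t = 0.
Proof.
  intros HA Hr H t Ht.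
  apply (const_deriv (fun t => Fv a i m 0 t) (fun t => Fv a i (S m) 0 t) rho c); auto.
  intros t0 Ht0. apply (Fv_dy r); auto. rewrite Rabs_R0. pose proof (Rabs_pos t0). lra. lra.
Qed.

Lemma iter_const a r i j c rho : AC a r -> rho <= r ->
  (forall t, Rabs t < rho -> Fv a i j 0 t = c) -> forall k t, Rabs t < rho -> Fv a i (S k + j) 0 t = 0.
Proof.
  intros HA Hr H k. induction k.
  - simpl. apply (step_const a r i j c rho); auto.
  - change (S (S k) + j)%nat with (S (S k + j)). apply (step_const a r i (S k + j) 0 rho); auto.
Qed.

Lemma Gxx_axis a b y : (forall j, Fv a 1 j 0 y = 0) -> Fv a 0 1 0 y = 1 -> (forall j, Fv a 0 (S (S j)) 0 y = 0) ->
  ev a b (sdx (sdx eG)) 0 y = Fv a 2 2 0 y + 2 * Fv a 2 0 0 y * Fv a 2 1 0 y.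
Proof. intros H1 H2 H3. unfold eG, eA, eB, eneg. simpl. rewrite !H1, !H2, !H3. ring. Qed.
Lemma Gxxx_axis a b y : (forall j, Fv a 1 j 0 y = 0) -> Fv a 0 1 0 y = 1 -> (forall j, Fv a 0 (S (S j)) 0 y = 0) ->
  ev a b (sdx (sdx (sdx eG))) 0 y = Fv a 3 2 0 y + 4 * Fv a 2 0 0 y * Fv a 3 1 0 y.
Proof. intros H1 H2 H3. unfold eG, eA, eB, eneg. simpl. rewrite !H1, !H2, !H3. ring. Qed.
Lemma Bxx_axis a b y : (forall j, Fv a 1 j 0 y = 0) -> Fv a 0 1 0 y = 1 ->
  ev a b (sdx (sdx eB)) 0 y = -2 * (Fv a 2 0 0 y * Fv a 2 0 0 y + Fv a 2 1 0 y).
Proof. intros H1 H2. unfold eB, eneg. simpl. rewrite !H1, !H2. ring. Qed.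

Lemma der_lin (g : R -> R) l x c : is_derive g x l -> is_derive (fun t => g t - c * t) x (l - c).
Proof. intro H. auto_derive. exists l; exact H.
  replace (Derive (fun x0 : R => g x0) x) with l. ring. symmetry; apply is_derive_unique; exact H. Qed.
Lemma der_quad (g : R -> R) l x c : is_derive g x l -> is_derive (fun t => g t - c * t ^ 2) x (l - 2 * c * x).
Proof. intro H. auto_derive. exists l; exact H.
  replace (Derive (fun x0 : R => g x0) x) with l. ring. symmetry; apply is_derive_unique; exact H. Qed.
Lemma der_scal (g : R -> R) l x c : is_derive g x l -> is_derive (fun t => c * g t) x (c * l).
Proof. intro H. auto_derive. exists l; exact H.
  replace (Derive (fun x0 : R => g x0) x) with l. ring. symmetry; apply is_derive_unique; exact H. Qed.

Lemma claim_w q u z w c S Kc : 1/2 <= q -> q * u = - z / 2 - w * c -> Rabs z <= S -> Rabs w <= S -> Rabs c <= Kc ->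
  Rabs u <= (1 + 2 * Kc) * S.
Proof.
  intros Hq H Hz Hw Hc. apply div_bound in H; auto.
  assert (Rabs (- z / 2 - w * c) <= Rabs z / 2 + Rabs w * Rabs c).
  { replace (- z / 2 - w * c) with ((-z) * /2 + - (w * c)) by (unfold Rdiv; ring).
    eapply Rle_trans; [apply Rabs_triang|]. rewrite Rabs_mult, !Rabs_Ropp, Rabs_mult, (Rabs_right (/2)) by lra. lra. }
  assert (Rabs w * Rabs c <= S * Kc) by (apply Rmult_le_compat; auto; apply Rabs_pos).
  lra.
Qed.

Lemma claim_U q U a1 a2 a3 a4 b1 b2 b3 b4 S B1 B2 B3 B4 : 1/2 <= q ->
  -(1/2) * q * U + a1 * b1 + a2 * b2 + a3 * b3 + a4 * b4 = 0 ->
  Rabs a1 <= S -> Rabs a2 <= S -> Rabs a3 <= S -> Rabs a4 <= S ->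
  Rabs b1 <= B1 -> Rabs b2 <= B2 -> Rabs b3 <= B3 -> Rabs b4 <= B4 ->
  Rabs U <= 4 * (B1 + B2 + B3 + B4) * S.
Proof.
  intros Hq H. intros.
  assert (HqU : q * U = 2 * (a1 * b1 + a2 * b2 + a3 * b3 + a4 * b4)) by lra.
  apply div_bound in HqU; auto. rewrite Rabs_mult, (Rabs_right 2) in HqU by lra.
  pose proof (lin4 a1 a2 a3 a4 b1 b2 b3 b4 S B1 B2 B3 B4). lra.
Qed.

Arguments Fv : simpl never.

Theorem proposition4p1 (f : R -> R -> R) :
  analytic_germ2 f ->
  f 0 0 = 0 -> partial_x f 0 0 = 0 -> partial_y f 0 0 = 1 ->
  B_nonzero_dense f ->
  (exists phi : R -> R -> R, analytic_germ2 phi /\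
     exists e : R, 0 < e /\ forall x y, near_o e x y ->
       A_F f x y - phi x y * (B_F f x y)^2 = 0) ->
  partial_x (B_F f) 0 0 = 0 -> partial_y (B_F f) 0 0 = 0 ->
  exists mu : R,
    (exists e : R, 0 < e /\ forall y, Rabs y < e ->
       Derive (alpha_F f) y + (alpha_F f y)^2 + mu = 0 /\
       Derive_n (beta_F f) 2 y + 4 * alpha_F f y * Derive (beta_F f) y = 0) /\
    (0 < mu -> exists e : R, 0 < e /\ forall x y, near_o e x y -> ~ (B_F f x y < 0)) /\
    (mu < 0 -> exists e : R, 0 < e /\ forall x y, near_o e x y -> ~ (0 < B_F f x y)) /\
    (changes_causal_type f -> mu = 0).
Proof.
  intros [r1 [Hr1 [a Ha]]] Hf0 Hfx Hfy _ [phi [[r2 [Hr2 [b Hb]]] [e0 [He0 HAe]]]] HBx HBy.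
  set (r := Rmin r1 (Rmin r2 e0)).
  assert (Hr : 0 < r) by (unfold r; repeat apply Rmin_pos; auto).
  assert (Hrr1 : r <= r1) by (unfold r; apply Rmin_l).
  assert (Hrr2 : r <= r2) by (unfold r; eapply Rle_trans; [apply Rmin_r| apply Rmin_l]).
  assert (Hrr3 : r <= e0) by (unfold r; eapply Rle_trans; [apply Rmin_r| apply Rmin_r]).
  assert (HAa : AC a r) by (apply (AC_mono a r1); auto; apply (an_AC f r1 a Ha)).
  assert (HAb : AC b r) by (apply (AC_mono b r2); auto; apply (an_AC phi r2 b Hb)).
  assert (Hfv : forall x y, Rabs x < r -> Rabs y < r -> f x y = ev a b (EF 0 0) x y).
  { intros x y Hx Hy. apply (an_val f r1 a Ha); lra. }
  assert (Hphv : forall x y, Rabs x < r -> Rabs y < r -> phi x y = Fv b 0 0 x y).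
  { intros x y Hx Hy. apply (an_val phi r2 b Hb); lra. }
  assert (H0r : Rabs 0 < r) by (rewrite Rabs_R0; auto).
  assert (Hpx : forall x y, Rabs x < r -> Rabs y < r -> partial_x f x y = ev a b (EF 1 0) x y).
  { intros; apply (pdx_loc a b r HAa HAb f (EF 0 0)); auto. }
  assert (Hpy : forall x y, Rabs x < r -> Rabs y < r -> partial_y f x y = ev a b (EF 0 1) x y).
  { intros; apply (pdy_loc a b r HAa HAb f (EF 0 0)); auto. }
  assert (Hpxx : forall x y, Rabs x < r -> Rabs y < r -> partial_x (partial_x f) x y = ev a b (EF 2 0) x y).
  { intros; apply (pdx_loc a b r HAa HAb _ (EF 1 0)); auto. }
  assert (Hpyx : forall x y, Rabs x < r -> Rabs y < r -> partial_y (partial_x f) x y = ev a b (EF 1 1) x y).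
  { intros; apply (pdy_loc a b r HAa HAb _ (EF 1 0)); auto. }
  assert (Hpyy : forall x y, Rabs x < r -> Rabs y < r -> partial_y (partial_y f) x y = ev a b (EF 0 2) x y).
  { intros; apply (pdy_loc a b r HAa HAb _ (EF 0 1)); auto. }
  assert (Hpxxx : forall x y, Rabs x < r -> Rabs y < r -> partial_x (partial_x (partial_x f)) x y = ev a b (EF 3 0) x y).
  { intros; apply (pdx_loc a b r HAa HAb _ (EF 2 0)); auto. }
  assert (HBv : forall x y, Rabs x < r -> Rabs y < r -> B_F f x y = ev a b eB x y).
  { intros x y Hx Hy. unfold B_F. rewrite Hpx, Hpy by auto. unfold eB, eneg. simpl. ring. }
  assert (HAv : forall x y, Rabs x < r -> Rabs y < r -> A_F f x y = ev a b eA x y).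
  { intros x y Hx Hy. unfold A_F. rewrite Hpx, Hpy, Hpxx, Hpyx, Hpyy by auto. unfold eA, eneg. simpl. ring. }
  assert (HG : forall x y, Rabs x < r -> Rabs y < r -> ev a b eG x y = 0).
  { intros x y Hx Hy. assert (Hn : near_o e0 x y) by (split; lra).
    specialize (HAe x y Hn). rewrite HAv, HBv, Hphv in HAe by auto.
    change (ev a b eG x y) with (ev a b eA x y + -1 * (Fv b 0 0 x y * (ev a b eB x y * ev a b eB x y))).
    rewrite <- HAe. ring. }
  assert (HBx0 : ev a b (sdx eB) 0 0 = 0).
  { rewrite <- (pdx_loc a b r HAa HAb (B_F f) eB); auto. }
  assert (HBy0 : ev a b (sdy eB) 0 0 = 0).
  { rewrite <- (pdy_loc a b r HAa HAb (B_F f) eB); auto. }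
  assert (Hpx0 : Fv a 1 0 0 0 = 0) by (change (Fv a 1 0 0 0) with (ev a b (EF 1 0) 0 0); rewrite <- Hpx; auto).
  assert (Hpy0 : Fv a 0 1 0 0 = 1) by (change (Fv a 0 1 0 0) with (ev a b (EF 0 1) 0 0); rewrite <- Hpy; auto).
  set (rho0 := r / 2).
  assert (Hrho0 : 0 < rho0 < r) by (unfold rho0; lra).
  set (KA := fun i j => Series (fun n => Ma (D a i j) n * rho0 ^ n)).
  set (KB := fun i j => Series (fun n => Ma (D b i j) n * rho0 ^ n)).
  assert (Hatom : forall x y, Rabs x <= rho0 -> Rabs y <= rho0 -> forall e, Rabs (ev a b e x y) <= bnd KA KB e).
  { intros x y Hx Hy e. apply ev_bnd; intros; unfold Fv; apply (val_bound _ r); auto; try apply AC_D; auto; lra. }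
  assert (Hbpos : forall e, 0 <= bnd KA KB e).
  { intro e. eapply Rle_trans. apply (Rabs_pos (ev a b e 0 0)). apply Hatom; rewrite Rabs_R0; lra. }
  set (K02 := KA 0%nat 2%nat).
  assert (HK02 : 0 <= K02) by apply (Hbpos (EF 0 2)).
  set (rho1 := Rmin rho0 (/ (2 * (K02 + 1)))).
  assert (Hrho1 : 0 < rho1) by (unfold rho1; apply Rmin_pos; [lra| apply Rinv_0_lt_compat; lra]).
  assert (Hrho1b : rho1 <= rho0) by apply Rmin_l.
  assert (Hq : forall t, Rabs t < rho1 -> 1/2 <= Fv a 0 1 0 t).
  { intros t Ht.
    assert (Hm := mvt_bound (fun t => Fv a 0 1 0 t) (fun t => Fv a 0 2 0 t) rho1 K02 0 t HK02).
    assert (Hm' : Rabs (Fv a 0 1 0 t - Fv a 0 1 0 0) <= K02 * Rabs t ^ 1).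
    { apply Hm; auto.
      - intros t0 Ht0. apply (Fv_dy r); auto. lra.
      - intros t0 Ht0. rewrite pow_O, Rmult_1_r. refine (Hatom 0 t0 _ _ (EF 0 2)); rewrite ?Rabs_R0; lra. }
    rewrite Hpy0, pow_1 in Hm'.
    assert (Ht2 : Rabs t < / (2 * (K02 + 1))) by (eapply Rlt_le_trans; [exact Ht| apply Rmin_r]).
    assert (Ht3 : 2 * (K02 + 1) * Rabs t < 1).
    { apply Rmult_lt_reg_l with (/ (2 * (K02 + 1))). apply Rinv_0_lt_compat; lra.
      rewrite <- Rmult_assoc, Rinv_l, Rmult_1_l, Rmult_1_r by lra. auto. }
    apply Rabs_le_between in Hm'. pose proof (Rabs_pos t). nra. }
  set (eN := eN5 (EF 1 0) ez2 eB (sdx eB) (sdy eB)).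
  set (K := 2 + 2 * bnd KA KB (EF 2 0) + 2 * bnd KA KB (EF 1 1)
            + 4 * (bnd KA KB c1 + bnd KA KB c2 + bnd KA KB c3 + bnd KA KB c4)
            + 4 * (bnd KA KB d1 + bnd KA KB d2 + bnd KA KB d3 + bnd KA KB d4)).
  assert (HK : 1 <= K).
  { unfold K. pose proof (Hbpos (EF 2 0)). pose proof (Hbpos (EF 1 1)).
    pose proof (Hbpos c1). pose proof (Hbpos c2). pose proof (Hbpos c3). pose proof (Hbpos c4).
    pose proof (Hbpos d1). pose proof (Hbpos d2). pose proof (Hbpos d3). pose proof (Hbpos d4). lra. }
  assert (HN0 : ev a b eN 0 0 = 0).
  { unfold eN. rewrite N_val.
    assert (E3 : ev a b eB 0 0 = 0) by (unfold eB, eneg; simpl; rewrite Hpx0, Hpy0; ring).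
    rewrite E3, HBx0, HBy0. unfold ez2. simpl. rewrite Hpx0, Hpy0. ring. }
  assert (HZ : forall y, Rabs y < rho1 -> ev a b eN 0 y = 0).
  { apply (gronwall (fun t => ev a b eN 0 t) (fun t => ev a b (sdy eN) 0 t) rho1 (10 * K)); auto.
    - lra.
    - intros t Ht. apply (ev_dy a b r HAa HAb); auto. lra.
    - intros t Ht. unfold eN. rewrite N_val.
      repeat apply Rplus_le_le_0_compat; apply Rle_0_sqr.
    - intros t Ht. unfold eN. rewrite N_der, N_val.
      assert (Ht' : Rabs t <= rho0) by lra. assert (Htr : Rabs t < r) by lra.
      assert (H0' : Rabs 0 <= rho0) by (rewrite Rabs_R0; lra).
      assert (Hbd := fun e => Hatom 0 t H0' Ht' e).
      assert (E1 := I1 a b 0 t). assert (E2 := I2 a b 0 t). assert (E3 := I3 a b 0 t). assert (E4 := I4 a b 0 t).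
      assert (G3 : ev a b (sdx eG) 0 t = 0) by (apply (zero_dx a b r HAa HAb eG HG); auto).
      assert (G4 : ev a b (sdy eG) 0 t = 0) by (apply (zero_dy a b r HAa HAb eG HG); auto).
      rewrite G3 in E3. rewrite G4 in E4.
      assert (Hq' := Hq t Ht).
      set (z1 := ev a b (EF 1 0) 0 t) in *. set (z2 := ev a b ez2 0 t) in *. set (z3 := ev a b eB 0 t) in *.
      set (z4 := ev a b (sdx eB) 0 t) in *. set (z5 := ev a b (sdy eB) 0 t) in *.
      set (S := Rabs z1 + Rabs z2 + Rabs z3 + Rabs z4 + Rabs z5).
      assert (HS1 : Rabs z1 <= S) by (unfold S; pose proof (Rabs_pos z2); pose proof (Rabs_pos z3); pose proof (Rabs_pos z4); pose proof (Rabs_pos z5); lra).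
      assert (HS3 : Rabs z3 <= S) by (unfold S; pose proof (Rabs_pos z2); pose proof (Rabs_pos z1); pose proof (Rabs_pos z4); pose proof (Rabs_pos z5); lra).
      assert (HS4 : Rabs z4 <= S) by (unfold S; pose proof (Rabs_pos z2); pose proof (Rabs_pos z3); pose proof (Rabs_pos z1); pose proof (Rabs_pos z5); lra).
      assert (HS5 : Rabs z5 <= S) by (unfold S; pose proof (Rabs_pos z2); pose proof (Rabs_pos z3); pose proof (Rabs_pos z4); pose proof (Rabs_pos z1); lra).
      assert (HS0 : 0 <= S) by (eapply Rle_trans; [apply Rabs_pos| exact HS1]).
      assert (HKS : forall c, c <= K -> c * S <= K * S) by (intros; apply Rmult_le_compat_r; auto).
      pose proof (Hbpos (EF 2 0)). pose proof (Hbpos (EF 1 1)).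
      pose proof (Hbpos c1). pose proof (Hbpos c2). pose proof (Hbpos c3). pose proof (Hbpos c4).
      pose proof (Hbpos d1). pose proof (Hbpos d2). pose proof (Hbpos d3). pose proof (Hbpos d4).
      assert (HK1 : 1 + 2 * bnd KA KB (EF 2 0) <= K) by (unfold K; lra).
      assert (HK2 : 1 + 2 * bnd KA KB (EF 1 1) <= K) by (unfold K; lra).
      assert (HK3 : 4 * (bnd KA KB c1 + bnd KA KB c2 + bnd KA KB c3 + bnd KA KB c4) <= K) by (unfold K; lra).
      assert (HK4 : 4 * (bnd KA KB d1 + bnd KA KB d2 + bnd KA KB d3 + bnd KA KB d4) <= K) by (unfold K; lra).
      assert (Hw1 : Rabs (ev a b (sdy (EF 1 0)) 0 t) <= K * S).
      { eapply Rle_trans. apply (claim_w (Fv a 0 1 0 t) _ z4 z1 (Fv a 2 0 0 t) S (bnd KA KB (EF 2 0))); auto.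
        simpl. change z1 with (Fv a 1 0 0 t). rewrite E1. field. apply (Hbd (EF 2 0)).
        apply HKS. auto. }
      assert (Hw2 : Rabs (ev a b (sdy ez2) 0 t) <= K * S).
      { change (ev a b (sdy ez2) 0 t) with (Fv a 0 2 0 t + 0). rewrite Rplus_0_r.
        eapply Rle_trans. apply (claim_w (Fv a 0 1 0 t) _ z5 z1 (Fv a 1 1 0 t) S (bnd KA KB (EF 1 1))); auto.
        change z1 with (Fv a 1 0 0 t). rewrite E2. field. apply (Hbd (EF 1 1)).
        apply HKS. auto. }
      assert (Hw4 : Rabs (ev a b (sdy (sdx eB)) 0 t) <= K * S).
      { eapply Rle_trans. apply (claim_U (Fv a 0 1 0 t) _ z3 z4 z5 z1 (ev a b c1 0 t) (ev a b c2 0 t) (ev a b c3 0 t) (ev a b c4 0 t)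
           S (bnd KA KB c1) (bnd KA KB c2) (bnd KA KB c3) (bnd KA KB c4)); auto.
        apply HKS. auto. }
      assert (Hw5 : Rabs (ev a b (sdy (sdy eB)) 0 t) <= K * S).
      { eapply Rle_trans. apply (claim_U (Fv a 0 1 0 t) _ z3 z4 z5 z1 (ev a b d1 0 t) (ev a b d2 0 t) (ev a b d3 0 t) (ev a b d4 0 t)
           S (bnd KA KB d1) (bnd KA KB d2) (bnd KA KB d3) (bnd KA KB d4)); auto.
        apply HKS. auto. }
      assert (Hw3 : Rabs z5 <= K * S) by (eapply Rle_trans; [exact HS5| pose proof (HKS 1 HK); lra]).
      apply (sq_ineq z1 z2 z3 z4 z5); auto; lra.
    }
  assert (Hrho1r : rho1 <= r) by lra.
  assert (Hzero : forall y, Rabs y < rho1 -> Fv a 1 0 0 y = 0 /\ Fv a 0 1 0 y = 1 /\ ev a b eB 0 y = 0 /\ ev a b (sdx eB) 0 y = 0).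
  { intros y Hy. specialize (HZ y Hy). unfold eN in HZ. rewrite N_val in HZ.
    apply sumsq5 in HZ. destruct HZ as [Z1 [Z2 [Z3 [Z4 Z5]]]].
    unfold ez2 in Z2. simpl in Z2. simpl in Z1. repeat split; auto; lra. }
  assert (H1all : forall j y, Rabs y < rho1 -> Fv a 1 j 0 y = 0).
  { intros [|j] y Hy. apply Hzero; auto.
    replace (S j) with (S j + 0)%nat by lia.
    apply (iter_const a r 1 0 0 rho1); auto. intros; apply Hzero; auto. }
  assert (H0all : forall j y, Rabs y < rho1 -> Fv a 0 (S (S j)) 0 y = 0).
  { intros j y Hy. replace (S (S j)) with (S j + 1)%nat by lia.
    apply (iter_const a r 0 1 1 rho1); auto. intros; apply Hzero; auto. }
  assert (HGxx : forall y, Rabs y < rho1 -> Fv a 2 2 0 y + 2 * Fv a 2 0 0 y * Fv a 2 1 0 y = 0).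
  { intros y Hy. rewrite <- (Gxx_axis a b y); [| intro j; apply H1all; auto | apply Hzero; auto | intro j; apply H0all; auto].
    assert (Hyr : Rabs y < r) by lra.
    apply (zero_dx a b r HAa HAb); auto. apply (zero_dx a b r HAa HAb); auto. }
  assert (HGxxx : forall y, Rabs y < rho1 -> Fv a 3 2 0 y + 4 * Fv a 2 0 0 y * Fv a 3 1 0 y = 0).
  { intros y Hy. rewrite <- (Gxxx_axis a b y); [| intro j; apply H1all; auto | apply Hzero; auto | intro j; apply H0all; auto].
    assert (Hyr : Rabs y < r) by lra.
    apply (zero_dx a b r HAa HAb); auto. apply (zero_dx a b r HAa HAb); auto. apply (zero_dx a b r HAa HAb); auto. }
  set (mu := - (Fv a 2 1 0 0 + Fv a 2 0 0 0 * Fv a 2 0 0 0)).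
  assert (Hode1 : forall y, Rabs y < rho1 -> Fv a 2 1 0 y + Fv a 2 0 0 y * Fv a 2 0 0 y + mu = 0).
  { intros y Hy.
    assert (Hm := mvt_bound (fun t => ev a b (EAdd (EF 2 1) (EMul (EF 2 0) (EF 2 0))) 0 t)
       (fun t => ev a b (sdy (EAdd (EF 2 1) (EMul (EF 2 0) (EF 2 0)))) 0 t) rho1 0 0 y (Rle_refl 0)).
    assert (Hm' : Rabs (ev a b (EAdd (EF 2 1) (EMul (EF 2 0) (EF 2 0))) 0 y - ev a b (EAdd (EF 2 1) (EMul (EF 2 0) (EF 2 0))) 0 0) <= 0 * Rabs y ^ 1).
    { apply Hm; auto.
      - intros t Ht. apply (ev_dy a b r HAa HAb); auto. lra.
      - intros t Ht. simpl. rewrite Rmult_0_l.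
        replace (Fv a 2 2 0 t + (Fv a 2 1 0 t * Fv a 2 0 0 t + Fv a 2 0 0 t * Fv a 2 1 0 t)) with
          (Fv a 2 2 0 t + 2 * Fv a 2 0 0 t * Fv a 2 1 0 t) by ring.
        rewrite HGxx by auto. rewrite Rabs_R0. lra. }
    rewrite Rmult_0_l in Hm'. simpl in Hm'. unfold mu.
    pose proof (Rabs_pos (Fv a 2 1 0 y + Fv a 2 0 0 y * Fv a 2 0 0 y - (Fv a 2 1 0 0 + Fv a 2 0 0 0 * Fv a 2 0 0 0))).
    assert (Hz : Rabs (Fv a 2 1 0 y + Fv a 2 0 0 y * Fv a 2 0 0 y - (Fv a 2 1 0 0 + Fv a 2 0 0 0 * Fv a 2 0 0 0)) = 0) by lra.
    apply Rabs_eq_0 in Hz. lra. }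
  assert (Halpha : forall t, Rabs t < r -> alpha_F f t = Fv a 2 0 0 t).
  { intros t Ht. unfold alpha_F. change (Derive_n (fun x => f x t) 2 0) with (partial_x (partial_x f) 0 t).
    rewrite Hpxx; auto. }
  assert (Hbeta : forall t, Rabs t < r -> beta_F f t = / 2 * Fv a 3 0 0 t).
  { intros t Ht. unfold beta_F. change (Derive_n (fun x => f x t) 3 0) with (partial_x (partial_x (partial_x f)) 0 t).
    rewrite Hpxxx; auto. }
  assert (HDalpha : forall y, Rabs y < r -> Derive (alpha_F f) y = Fv a 2 1 0 y).
  { intros y Hy. rewrite (Derive_ext_loc _ (fun t => Fv a 2 0 0 t)).
    apply is_derive_unique. apply (Fv_dy r); auto.
    apply (loc_box r); auto. }
  assert (HDbeta : forall y, Rabs y < r -> Derive (beta_F f) y = / 2 * Fv a 3 1 0 y).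
  { intros y Hy. rewrite (Derive_ext_loc _ (fun t => / 2 * Fv a 3 0 0 t)).
    apply is_derive_unique. apply der_scal. apply (Fv_dy r); auto.
    apply (loc_box r); auto. }
  assert (HD2beta : forall y, Rabs y < r -> Derive_n (beta_F f) 2 y = / 2 * Fv a 3 2 0 y).
  { intros y Hy. change (Derive_n (beta_F f) 2 y) with (Derive (fun t => Derive (beta_F f) t) y).
    rewrite (Derive_ext_loc _ (fun t => / 2 * Fv a 3 1 0 t)).
    apply is_derive_unique. apply der_scal. apply (Fv_dy r); auto.
    apply (loc_box r); auto. }
  set (K3 := bnd KA KB (sdx (sdx (sdx eB)))).
  assert (HK3 : 0 <= K3) by apply Hbpos.
  assert (HTay : forall x y, Rabs x < rho1 -> Rabs y < rho1 -> Rabs (ev a b eB x y - mu * x ^ 2) <= K3 * Rabs x ^ 3).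
  { intros x y Hx Hy.
    assert (Hyr : Rabs y < r) by lra.
    assert (Hv2 : ev a b (sdx (sdx eB)) 0 y = 2 * mu).
    { rewrite (Bxx_axis a b y); [| intro j; apply H1all; auto | apply Hzero; auto].
      pose proof (Hode1 y Hy). lra. }
    assert (Ha2 : forall t, Rabs t < rho1 -> Rabs (ev a b (sdx (sdx eB)) t y - 2 * mu) <= K3 * Rabs t ^ 1).
    { intros t Ht. rewrite <- Hv2.
      apply (mvt_bound (fun t => ev a b (sdx (sdx eB)) t y) (fun t => ev a b (sdx (sdx (sdx eB))) t y) rho1 K3 0 t); auto.
      - intros t0 Ht0. apply (ev_dx a b r HAa HAb); auto. lra.
      - intros t0 Ht0. rewrite pow_O, Rmult_1_r. apply Hatom; lra. }
    assert (Ha1 : forall t, Rabs t < rho1 -> Rabs (ev a b (sdx eB) t y - 2 * mu * t) <= K3 * Rabs t ^ 2).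
    { intros t Ht.
      assert (Hm := mvt_bound (fun t => ev a b (sdx eB) t y - (2 * mu) * t) (fun t => ev a b (sdx (sdx eB)) t y - 2 * mu) rho1 K3 1 t HK3).
      replace (ev a b (sdx eB) t y - 2 * mu * t) with
        ((fun t => ev a b (sdx eB) t y - (2 * mu) * t) t - (fun t => ev a b (sdx eB) t y - (2 * mu) * t) 0).
      apply Hm; auto.
      - intros t0 Ht0. apply der_lin. apply (ev_dx a b r HAa HAb); auto. lra.
      - cbv beta. destruct (Hzero y Hy) as [_ [_ [_ Z4]]]. rewrite Z4. ring. }
    assert (Hm := mvt_bound (fun t => ev a b eB t y - mu * t ^ 2) (fun t => ev a b (sdx eB) t y - 2 * mu * t) rho1 K3 2 x HK3).
    replace (ev a b eB x y - mu * x ^ 2) with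
      ((fun t => ev a b eB t y - mu * t ^ 2) x - (fun t => ev a b eB t y - mu * t ^ 2) 0).
    apply Hm; auto.
    - intros t0 Ht0. apply der_quad. apply (ev_dx a b r HAa HAb); auto. lra.
    - cbv beta. destruct (Hzero y Hy) as [_ [_ [Z3 _]]]. rewrite Z3. ring. }
  assert (Hpos : 0 < mu -> exists e : R, 0 < e /\ forall x y, near_o e x y -> ~ (B_F f x y < 0)).
  { intros Hmu. exists (Rmin rho1 (mu / (K3 + 1))). split.
    { apply Rmin_pos; auto. apply Rdiv_lt_0_compat; lra. }
    intros x y [Hx Hy] HB.
    assert (Hx1 : Rabs x < rho1) by (eapply Rlt_le_trans; [exact Hx| apply Rmin_l]).
    assert (Hy1 : Rabs y < rho1) by (eapply Rlt_le_trans; [exact Hy| apply Rmin_l]).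
    assert (Hx2 : Rabs x < mu / (K3 + 1)) by (eapply Rlt_le_trans; [exact Hx| apply Rmin_r]).
    rewrite HBv in HB by lra.
    specialize (HTay x y Hx1 Hy1). apply Rabs_le_between in HTay.
    assert (Hx3 : (K3 + 1) * Rabs x < mu).
    { apply Rmult_lt_reg_l with (/ (K3 + 1)). apply Rinv_0_lt_compat; lra.
      rewrite <- Rmult_assoc, Rinv_l, Rmult_1_l by lra. unfold Rdiv in Hx2. lra. }
    rewrite <- (pow2_abs x) in HTay. pose proof (Rabs_pos x).
    assert (0 <= Rabs x ^ 2 * (mu - K3 * Rabs x)) by (apply Rmult_le_pos; [apply pow2_ge_0| nra]).
    assert (E : mu * Rabs x ^ 2 - K3 * Rabs x ^ 3 = Rabs x ^ 2 * (mu - K3 * Rabs x)) by ring. lra. }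
  assert (Hneg : mu < 0 -> exists e : R, 0 < e /\ forall x y, near_o e x y -> ~ (0 < B_F f x y)).
  { intros Hmu. exists (Rmin rho1 (- mu / (K3 + 1))). split.
    { apply Rmin_pos; auto. apply Rdiv_lt_0_compat; lra. }
    intros x y [Hx Hy] HB.
    assert (Hx1 : Rabs x < rho1) by (eapply Rlt_le_trans; [exact Hx| apply Rmin_l]).
    assert (Hy1 : Rabs y < rho1) by (eapply Rlt_le_trans; [exact Hy| apply Rmin_l]).
    assert (Hx2 : Rabs x < - mu / (K3 + 1)) by (eapply Rlt_le_trans; [exact Hx| apply Rmin_r]).
    rewrite HBv in HB by lra.
    specialize (HTay x y Hx1 Hy1). apply Rabs_le_between in HTay.
    assert (Hx3 : (K3 + 1) * Rabs x < - mu).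
    { apply Rmult_lt_reg_l with (/ (K3 + 1)). apply Rinv_0_lt_compat; lra.
      rewrite <- Rmult_assoc, Rinv_l, Rmult_1_l by lra. unfold Rdiv in Hx2. lra. }
    rewrite <- (pow2_abs x) in HTay. pose proof (Rabs_pos x).
    assert (0 <= Rabs x ^ 2 * (- mu - K3 * Rabs x)) by (apply Rmult_le_pos; [apply pow2_ge_0| nra]).
    assert (E : mu * Rabs x ^ 2 + K3 * Rabs x ^ 3 = - (Rabs x ^ 2 * (- mu - K3 * Rabs x))) by ring. lra. }
  exists mu. split; [|split; [exact Hpos|split; [exact Hneg|]]].
  - exists rho1. split; auto. intros y Hy. assert (Hyr : Rabs y < r) by lra.
    rewrite HDalpha, Halpha, HD2beta, HDbeta by auto. split.
    + pose proof (Hode1 y Hy). simpl. lra.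
    + pose proof (HGxxx y Hy).
      replace (/ 2 * Fv a 3 2 0 y + 4 * Fv a 2 0 0 y * (/ 2 * Fv a 3 1 0 y)) with
        (/ 2 * (Fv a 3 2 0 y + 4 * Fv a 2 0 0 y * Fv a 3 1 0 y)) by ring. rewrite H. ring.
  - intros Hch. destruct (Rtotal_order mu 0) as [Hlt|[Heq|Hgt]]; auto.
    + destruct (Hneg Hlt) as [e [He Hn]]. destruct (Hch e He) as [[x [y [Hxy HB]]] _].
      exfalso. apply (Hn x y Hxy HB).
    + destruct (Hpos Hgt) as [e [He Hn]]. destruct (Hch e He) as [_ [x [y [Hxy HB]]]].
      exfalso. apply (Hn x y Hxy HB).
Qed.
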